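(* Let $T>0$ and let $a\in C[0,1]$ with $a>0$ on $(0,1]$, $a(0)=0$ and $x\mapsto x/a(x)$ integrable, so that $p(x)=\int_0^x\frac{y}{a(y)}e^{y^2}dy$ is bounded on $[0,1]$ with $\|p\|_{L^\infty(0,1)}>0$. Let $\sigma\in C^2([0,1])$ with $\sigma>0$ in $(0,1)$, $\sigma(0)=\sigma(1)=0$, and choose $\beta=4$, $\rho>\frac{\ln 2}{\|\sigma\|_\infty}$, and $$\lambda\in\Big[\frac{e^{2\rho\|\sigma\|_\infty}-1}{(\beta-1)\|p\|_{L^\infty(0,1)}},\ \frac{2(e^{2\rho\|\sigma\|_\infty}-e^{\rho\|\sigma\|_\infty})}{(\beta-1)\|p\|_{L^\infty(0,1)}}\Big).$$ Let $T^*=(1+\varepsilon)\frac T2$ with $\varepsilon\in\big(0,\sqrt{1-\tfrac{2\sqrt2}{3}}\big)$. Then $$2\big(\hat\phi(0)-\check\phi(T^* )+\hat\Phi(0)\big)<0.$$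
   Context: $\theta(t)=\frac{1}{[t(T-t)]^2}$; $\nu(t)=\theta(T/2)$ on $[0,T/2]$, $\nu(t)=\theta(t)$ on $[T/2,T]$; $\psi(x)=\lambda(p(x)-\beta\|p\|_{L^\infty(0,1)})$; $\Psi(x)=e^{\rho\sigma(x)}-e^{2\rho\|\sigma\|_\infty}$; $\tilde\phi(t,x)=\nu(t)\psi(x)$, $\tilde\Phi(t,x)=\nu(t)\Psi(x)$; $\hat\phi(t)=\max_{x\in[0,1]}\tilde\phi(t,x)$, $\check\phi(t)=\min_{x\in[0,1]}\tilde\phi(t,x)$, $\hat\Phi(t)=\max_{x\in[0,1]}\tilde\Phi(t,x)$. *)

(* Defs.v *)
From HB Require Import structures.
From mathcomp Require Import all_boot all_order all_algebra.
From mathcomp Require Import all_classical all_reals all_analysis.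
Set Implicit Arguments. Unset Strict Implicit. Unset Printing Implicit Defensive.
Import Order.TTheory GRing.Theory Num.Theory.
Import numFieldNormedType.Exports.
Local Open Scope classical_set_scope.
Local Open Scope ring_scope.

Section Defs.
Variable R : realType.

(* sup norm on [0,1] (= L^infty(0,1) norm for the continuous functions used) *)
Definition supnorm01 (f : R -> R) : R := sup [set `|f x| | x in `[0, 1]].

Definition pfun (a : R -> R) (x : R) : R :=
  Rintegral (@lebesgue_measure R) `[0, x] (fun y => y / a y * expR (y ^+ 2)).

Definition theta (T t : R) : R := 1 / (t * (T - t)) ^+ 2.
Definition nu (T t : R) : R := if t <= T / 2 then theta T (T / 2) else theta T t.

Definition psi (a : R -> R) (lam beta x : R) : R :=
  lam * (pfun a x - beta * supnorm01 (pfun a)).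
Definition Psi (sig : R -> R) (rho x : R) : R :=
  expR (rho * sig x) - expR (2 * rho * supnorm01 sig).

Definition phi_tilde a lam beta T t x := nu T t * psi a lam beta x.
Definition Phi_tilde sig rho T t x := nu T t * Psi sig rho x.

Definition phi_hat a lam beta T t : R := sup [set phi_tilde a lam beta T t x | x in `[0, 1]].
Definition phi_check a lam beta T t : R := inf [set phi_tilde a lam beta T t x | x in `[0, 1]].
Definition Phi_hat sig rho T t : R := sup [set Phi_tilde sig rho T t x | x in `[0, 1]].
End Defs.

(* Main.v *)
Require Import Defs.
From HB Require Import structures.
From mathcomp Require Import all_boot all_order all_algebra.
From mathcomp Require Import all_classical all_reals all_analysis.
From mathcomp Require Import ring lra.
Import Order.TTheory GRing.Theory Num.Theory.
Import numFieldNormedType.Exports.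
Local Open Scope classical_set_scope.
Local Open Scope ring_scope.

Lemma supnorm_bnd {R : realType} {f : R -> R} : supnorm01 f != 0 ->
  (forall x, 0 <= x <= 1 -> `|f x| <= supnorm01 f) /\ 0 <= supnorm01 f.
Proof.
move=> hS.
have hs : has_sup [set `|f x| | x in `[0, 1]].
  apply/not_notP => /sup_out h; move: hS; by rewrite /supnorm01 h eqxx.
have ub : forall x, 0 <= x <= 1 -> `|f x| <= supnorm01 f.
  move=> x hx; apply: sup_upper_bound => //; exists x => //.
split => //; apply: le_trans (ub 0 _) => //; by rewrite lexx ler01.
Qed.

Lemma p_ge0 (R : realType) (a : R -> R) x : (forall y, 0 < y <= 1 -> 0 < a y) -> a 0 = 0 ->
  0 <= x <= 1 -> 0 <= pfun a x.
Proof.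
move=> ha a0 /andP[x0 x1]; rewrite /pfun /Rintegral; apply: fine_ge0.
apply: integral_ge0 => y; rewrite /= in_itv /= => /andP[y0 yx].
rewrite lee_fin; apply: mulr_ge0; last exact: expR_ge0.
apply: divr_ge0 => //; have [->|yp] := eqVneq y 0; first by rewrite a0.
apply: ltW; apply: ha; rewrite lt_neqAle eq_sym yp y0 /=; exact: le_trans yx x1.
Qed.

Theorem mainTheorem8 (R : realType) (T : R) (a sig : R -> R) (rho lam eps : R) :
  0 < T ->
  {within `[0, 1], continuous a} ->
  (forall x, 0 < x <= 1 -> 0 < a x) ->
  a 0 = 0 ->
  (@lebesgue_measure R).-integrable `[0, 1] (fun x => (x / a x)%:E) ->
  {in `]0, 1[, forall x, derivable sig x 1} ->
  {in `]0, 1[, forall x, derivable (derive1 sig) x 1} ->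
  {within `[0, 1], continuous sig} ->
  (exists d1 d2 : R -> R,
     {within `[0, 1], continuous d1} /\ {within `[0, 1], continuous d2} /\
     {in `]0, 1[, forall x, derive1 sig x = d1 x} /\
     {in `]0, 1[, forall x, derive1 (derive1 sig) x = d2 x}) ->
  (forall x, 0 < x < 1 -> 0 < sig x) ->
  sig 0 = 0 -> sig 1 = 0 ->
  ln 2 / supnorm01 sig < rho ->
  (expR (2 * rho * supnorm01 sig) - 1) / ((4 - 1) * supnorm01 (pfun a)) <= lam ->
  lam < 2 * (expR (2 * rho * supnorm01 sig) - expR (rho * supnorm01 sig))
          / ((4 - 1) * supnorm01 (pfun a)) ->
  0 < eps -> eps < Num.sqrt (1 - 2 * Num.sqrt 2 / 3) ->
  let Tstar := (1 + eps) * (T / 2) in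
  2 * (phi_hat a lam 4 T 0 - phi_check a lam 4 T Tstar + Phi_hat sig rho T 0) < 0.
Proof.
move=> T0 _ ha a0 _ _ _ _ _ _ _ _ hrho hlo hhi e0 esq; rewrite /=; set Tstar := (1 + eps) * (T / 2).
have hPn : supnorm01 (pfun a) != 0.
  apply/eqP => h; move: hlo hhi; rewrite h mulr0 invr0 !mulr0 => h1 h2.
  lra.
have hSn : supnorm01 sig != 0.
  apply/eqP => h; move: hlo hhi; rewrite h !mulr0 expR0 !subrr !mul0r => h1 h2.
  lra.
have [bP P0'] := supnorm_bnd hPn.
have [bS S0'] := supnorm_bnd hSn.
set P := supnorm01 (pfun a) in hPn bP P0' hlo hhi *.
set S := supnorm01 sig in hSn bS S0' hrho hlo hhi *.
have P0 : 0 < P by rewrite lt_neqAle eq_sym hPn P0'.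
have S0 : 0 < S by rewrite lt_neqAle eq_sym hSn S0'.
have rho0 : 0 < rho.
  apply: lt_trans hrho; apply: divr_gt0 => //; apply: ln_gt0; lra.
have E2gt1 : 1 < expR (2 * rho * S) by rewrite expR_gt1; apply: mulr_gt0 => //; lra.
have lam0 : 0 < lam.
  apply: lt_le_trans hlo; apply: divr_gt0; lra.
have hL : lam * P < 2 * (expR (2 * rho * S) - expR (rho * S)) / 3.
  have h3P : 0 < (4 - 1) * P by apply: mulr_gt0 => //; lra.
  move: hhi; rewrite ltr_pdivlMr // => h; rewrite ltr_pdivlMr; last lra.
  have -> : lam * P * 3 = lam * ((4 - 1) * P) by ring.
  exact: h.
set A := theta T (T / 2).
have A0 : 0 < A by rewrite /A /theta; apply: divr_gt0 => //; apply: exprn_gt0; apply: mulr_gt0; lra.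
have nu0 : nu T 0 = A by rewrite /nu ifT //; apply: divr_ge0; lra.
have q0 : 0 <= Num.sqrt (2:R) by rewrite sqrtr_ge0.
have q2 : Num.sqrt (2:R) ^+ 2 = 2 by apply: sqr_sqrtr; lra.
have qq0 : 0 < 1 - 2 * Num.sqrt (2:R) / 3 by nra.
have r0 : 0 <= Num.sqrt (1 - 2 * Num.sqrt (2:R) / 3) by rewrite sqrtr_ge0.
have r2 : Num.sqrt (1 - 2 * Num.sqrt (2:R) / 3) ^+ 2 = 1 - 2 * Num.sqrt (2:R) / 3 by apply: sqr_sqrtr; lra.
have e2 : eps ^+ 2 < 1 - 2 * Num.sqrt (2:R) / 3 by nra.
set u := 1 - eps ^+ 2.
have u0 : 2 * Num.sqrt (2:R) / 3 < u by rewrite /u; lra.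
have uu : 8 / 9 < u ^+ 2 by nra.
have upos : 0 < u by nra.
have nuT : nu T Tstar = A / u ^+ 2.
  rewrite /nu ifF; last by apply/negbTE; rewrite -ltNge /Tstar; nra.
  rewrite /A /theta /Tstar /u; field.
  have e1 : eps < 1 by nra.
  have t1 : 0 < T * 2 - T by lra.
  have t2 : 0 < T * 2 - (1 + eps) * T.
    have : 0 < (1 - eps) * T by apply: mulr_gt0; lra.
    lra.
  have t3 : 0 < 1 + eps by lra.
  by rewrite (lt0r_neq0 upos) (lt0r_neq0 t1) (lt0r_neq0 t2) (lt0r_neq0 t3).
have b1 : phi_hat a lam 4 T 0 <= A * (lam * (P - 4 * P)).
  apply: ge_sup; first by exists (phi_tilde a lam 4 T 0 0), 0 => //=; rewrite in_itv /= lexx ler01.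
  move=> _ [x hx <-]; rewrite /phi_tilde nu0; apply: ler_wpM2l; first lra.
  rewrite /psi; apply: ler_wpM2l; first lra.
  rewrite lerD2r; apply: le_trans (real_ler_norm _) _; first exact: num_real.
  apply: bP; move: hx; by rewrite /= in_itv.
have b2 : Phi_hat sig rho T 0 <= A * (expR (rho * S) - expR (2 * rho * S)).
  apply: ge_sup; first by exists (Phi_tilde sig rho T 0 0), 0 => //=; rewrite in_itv /= lexx ler01.
  move=> _ [x hx <-]; rewrite /Phi_tilde nu0; apply: ler_wpM2l; first lra.
  rewrite /Psi lerD2r ler_expR; apply: ler_wpM2l; first lra.
  apply: le_trans (real_ler_norm _) _; first exact: num_real.
  apply: bS; move: hx; by rewrite /= in_itv.
have b3 : A / u ^+ 2 * (lam * (0 - 4 * P)) <= phi_check a lam 4 T Tstar.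
  apply: lb_le_inf; first by exists (phi_tilde a lam 4 T Tstar 0), 0 => //=; rewrite in_itv /= lexx ler01.
  move=> _ [x hx <-]; rewrite /phi_tilde nuT; apply: ler_wpM2l.
    apply: divr_ge0; first lra. apply: exprn_ge0; lra.
  rewrite /psi; apply: ler_wpM2l; first lra.
  rewrite lerD2r; apply: p_ge0 => //; move: hx; by rewrite /= in_itv.
set w := (u ^+ 2)^-1.
have w0 : 0 < w by rewrite /w invr_gt0 exprn_gt0.
have w98 : w < 9 / 8.
  rewrite /w -(invrK (9/8)) ltf_pV2 ?posrE; [lra | | lra].
  by rewrite exprn_gt0.
have L0 : 0 < lam * P by apply: mulr_gt0.
have key : - 3 * (lam * P) + 4 * w * (lam * P) + expR (rho * S) - expR (2 * rho * S) < 0.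
  have : 0 < (9/8 - w) * (lam * P) by apply: mulr_gt0; lra.
  lra.
have : A * (- 3 * (lam * P) + 4 * w * (lam * P) + expR (rho * S) - expR (2 * rho * S)) < 0.
  by rewrite pmulr_rlt0.
have -> : A * (- 3 * (lam * P) + 4 * w * (lam * P) + expR (rho * S) - expR (2 * rho * S))
  = A * (lam * (P - 4 * P)) - A / u ^+ 2 * (lam * (0 - 4 * P)) + A * (expR (rho * S) - expR (2 * rho * S)).
  rewrite /w; ring.
lra.
Qed.
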